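(* Let $a>1$, $\hbar>0$, $p\in\mathbb{R}^d$, and $C_k(n,a)=\binom{n}{k}\left(\frac{1+a}{2}\right)^{n-k}\left(\frac{1-a}{2}\right)^k$. Then: (a) The sequence $F_n(x)=\sum_{k=0}^n C_k(n,a)\exp\bigl[\frac{ip\cdot x}{\hbar}(1-\frac{2k}{n})\bigr]$ converges to $F(x)=e^{iap\cdot x/\hbar}$ for every $x\in\mathbb{R}^d$, uniformly on compact subsets of $\mathbb{R}^d$. (b) If $q$ is an even positive integer, the sequence $Y_n(x)=\sum_{k=0}^n C_k(n,a)\exp\bigl[\frac{ip\cdot x}{\hbar}(-i)^q(1-\frac{2k}{n})^q\bigr]$ converges to $Y(x)=e^{ip\cdot x(-ia)^q/\hbar}$ for every $x\in\mathbb{R}^d$, uniformly on compact subsets of $\mathbb{R}^d$. (c) If $q$ is an odd positive integer, the sequence $Z_n(x)=\sum_{k=0}^n C_k(n,a)\exp\bigl[\frac{p\cdot x}{\hbar}(-i)^q(1-\frac{2k}{n})^q\bigr]$ converges to $Z(x)=e^{p\cdot x(-ia)^q/\hbar}$ for every $x\in\mathbb{R}^d$, uniformly on compact subsets of $\mathbb{R}^d$. *)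

(* Defs.v *)
(* classical reals (Stdlib Reals), with a minimal complex-number
   layer (pairs of reals) and the Euclidean space R^d modelled as the points
   x : nat -> R vanishing beyond coordinate d. *)
From Stdlib Require Import Reals List.
Open Scope R_scope.

Record C := mkC { Cre : R ; Cim : R }.
Definition RtoC (r : R) : C := mkC r 0.
Definition Ci : C := mkC 0 1.
Definition Cadd (z w : C) : C := mkC (Cre z + Cre w) (Cim z + Cim w).
Definition Copp (z : C) : C := mkC (- Cre z) (- Cim z).
Definition Csub (z w : C) : C := Cadd z (Copp w).
Definition Cmul (z w : C) : C :=
  mkC (Cre z * Cre w - Cim z * Cim w) (Cre z * Cim w + Cim z * Cre w).
Fixpoint Cpow (z : C) (n : nat) : C :=
  match n with O => RtoC 1 | S m => Cmul z (Cpow z m) end.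
Definition Cexp (z : C) : C :=
  mkC (exp (Cre z) * cos (Cim z)) (exp (Cre z) * sin (Cim z)).
Definition Cnorm (z : C) : R := sqrt (Cre z ^ 2 + Cim z ^ 2).
Fixpoint Csum (f : nat -> C) (n : nat) : C :=
  match n with O => f O | S m => Cadd (Csum f m) (f (S m)) end.

Fixpoint rsum (n : nat) (f : nat -> R) : R :=
  match n with O => 0 | S m => rsum m f + f m end.
Definition in_Rd (d : nat) (x : nat -> R) : Prop :=
  forall j, (d <= j)%nat -> x j = 0.
Definition dot (d : nat) (p x : nat -> R) : R := rsum d (fun j => p j * x j).
Definition dist (d : nat) (x y : nat -> R) : R :=
  sqrt (rsum d (fun j => (x j - y j) ^ 2)).
Definition open_set (d : nat) (U : (nat -> R) -> Prop) : Prop :=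
  forall x, U x -> exists r, 0 < r /\ forall y, dist d x y < r -> U y.
Definition compact (d : nat) (K : (nat -> R) -> Prop) : Prop :=
  (forall x, K x -> in_Rd d x) /\
  forall (I : Type) (U : I -> (nat -> R) -> Prop),
    (forall i, open_set d (U i)) ->
    (forall x, K x -> exists i, U i x) ->
    exists l : list I, forall x, K x -> exists i, In i l /\ U i x.

Definition conv_pw_and_unif_compact (d : nat)
    (f : nat -> (nat -> R) -> C) (g : (nat -> R) -> C) : Prop :=
  (forall x, in_Rd d x -> forall eps, 0 < eps ->
     exists N, forall n, (N <= n)%nat -> Cnorm (Csub (f n x) (g x)) < eps) /\
  (forall K, compact d K -> forall eps, 0 < eps ->
     exists N, forall n, (N <= n)%nat -> forall x, K x ->
       Cnorm (Csub (f n x) (g x)) < eps).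

Definition Ck (k n : nat) (a : R) : R :=
  Binomial.C n k * ((1 + a) / 2) ^ (n - k) * ((1 - a) / 2) ^ k.
Definition tk (k n : nat) : R := 1 - 2 * INR k / INR n.

(* Main.v *)
Require Import Defs.
From Stdlib Require Import Reals Arith.
From Stdlib Require Import Lra Lia List.
Open Scope R_scope.


Definition al (a : R) := (1 + a) / 2.
Definition be (a : R) := (1 - a) / 2.
Definition Wz (a : R) (n k : nat) : R := if (k <=? n)%nat then Ck k n a else 0.
Definition T (a : R) (n j : nat) : R :=
  sum_f_R0 (fun k => Wz a n k * (INR n - 2 * INR k) ^ j) n.
Definition cc (a : R) (m : nat) : R := al a + be a * (-1) ^ m.

Lemma C_n_0' n : Binomial.C n 0 = 1.
Proof. unfold Binomial.C. rewrite Nat.sub_0_r. simpl.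
  field. apply INR_fact_neq_0. Qed.

Lemma C_n_n' n : Binomial.C n n = 1.
Proof. unfold Binomial.C. rewrite Nat.sub_diag. simpl.
  field. apply INR_fact_neq_0. Qed.

Lemma Wz_S0 a n : Wz a (S n) 0 = al a * Wz a n 0.
Proof. unfold Wz, Ck. simpl Nat.leb. rewrite !C_n_0', !Nat.sub_0_r.
  fold (al a). simpl. ring. Qed.

Lemma Wz_SS a n k : (k <= n)%nat ->
  Wz a (S n) (S k) = be a * Wz a n k + al a * Wz a n (S k).
Proof.
  intros Hk. unfold Wz.
  replace ((S k <=? S n)%nat) with true by (symmetry; apply Nat.leb_le; lia).
  replace ((k <=? n)%nat) with true by (symmetry; apply Nat.leb_le; lia).
  unfold Ck. fold (al a) (be a).
  destruct (Nat.eq_dec k n) as [->|Hne].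
  - replace ((S n <=? n)%nat) with false by (symmetry; apply Nat.leb_gt; lia).
    rewrite !C_n_n', !Nat.sub_diag. simpl. ring.
  - replace ((S k <=? n)%nat) with true by (symmetry; apply Nat.leb_le; lia).
    rewrite <- pascal by lia. simpl (S n - S k)%nat.
    replace (n - k)%nat with (S (n - S k)) by lia. simpl. ring.
Qed.

Lemma sum_S_last f n : sum_f_R0 f (S n) = sum_f_R0 f n + f (S n).
Proof. reflexivity. Qed.

Lemma sumW_rec a n (g : nat -> R) :
  sum_f_R0 (fun k => Wz a (S n) k * g k) (S n) =
  al a * sum_f_R0 (fun k => Wz a n k * g k) n +
  be a * sum_f_R0 (fun k => Wz a n k * g (S k)) n.
Proof.
  rewrite decomp_sum by lia. simpl Init.Nat.pred.
  rewrite (sum_eq _ (fun i => be a * (Wz a n i * g (S i)) + al a * (Wz a n (S i) * g (S i)))).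
  2:{ intros i Hi. rewrite Wz_SS by lia. ring. }
  rewrite sum_plus.
  assert (H1 : sum_f_R0 (fun k => Wz a n k * g k) (S n) =
     sum_f_R0 (fun k => Wz a n k * g k) n).
  { rewrite sum_S_last. unfold Wz at 2.
    replace ((S n <=? n)%nat) with false by (symmetry; apply Nat.leb_gt; lia). ring. }
  rewrite decomp_sum in H1 by lia. simpl Init.Nat.pred in H1.
  rewrite Wz_S0. rewrite <- H1.
  rewrite (scal_sum (fun k => Wz a n k * g (S k))).
  rewrite Rmult_plus_distr_l, (scal_sum (fun i => Wz a n (S i) * g (S i))).
  rewrite (sum_eq (fun i => be a * (Wz a n i * g (S i))) (fun i => Wz a n i * g (S i) * be a)) by (intros; ring).
  rewrite (sum_eq (fun i => al a * (Wz a n (S i) * g (S i))) (fun i => Wz a n (S i) * g (S i) * al a)) by (intros; ring).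
  ring.
Qed.

Lemma scal_sum_l (f : nat -> R) c N :
  sum_f_R0 (fun i => c * f i) N = c * sum_f_R0 f N.
Proof. rewrite scal_sum. apply sum_eq. intros; ring. Qed.

Lemma sum_swap (F : nat -> nat -> R) n m :
  sum_f_R0 (fun k => sum_f_R0 (fun i => F k i) m) n =
  sum_f_R0 (fun i => sum_f_R0 (fun k => F k i) n) m.
Proof.
  induction n; simpl.
  - reflexivity.
  - rewrite IHn. rewrite <- sum_plus. reflexivity.
Qed.

Lemma T_rec a n j :
  T a (S n) j = sum_f_R0 (fun i => Binomial.C j i * T a n i * cc a (j - i)) j.
Proof.
  unfold T at 1. rewrite sumW_rec.
  rewrite (sum_eq (fun k => Wz a n k * (INR (S n) - 2 * INR k) ^ j)
     (fun k => sum_f_R0 (fun i => Wz a n k * (Binomial.C j i * (INR n - 2 * INR k) ^ i * 1 ^ (j - i))) j)).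
  2:{ intros k _. rewrite scal_sum_l. rewrite <- binomial. f_equal. f_equal. rewrite S_INR. ring. }
  rewrite (sum_eq (fun k => Wz a n k * (INR (S n) - 2 * INR (S k)) ^ j)
     (fun k => sum_f_R0 (fun i => Wz a n k * (Binomial.C j i * (INR n - 2 * INR k) ^ i * (-1) ^ (j - i))) j)).
  2:{ intros k _. rewrite scal_sum_l. rewrite <- binomial. f_equal. f_equal. rewrite !S_INR. ring. }
  rewrite (sum_swap _ n j). rewrite (sum_swap _ n j).
  rewrite <- !scal_sum_l. rewrite <- sum_plus.
  apply sum_eq. intros i _. unfold T, cc.
  rewrite <- !scal_sum_l. rewrite <- sum_plus.
  rewrite Rmult_comm, <- scal_sum_l.
  apply sum_eq. intros k _. rewrite pow1. ring.
Qed.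



Lemma m1_even k : (-1) ^ (2 * k) = 1.
Proof. rewrite pow_mult. replace ((-1)^2) with 1 by ring. apply pow1. Qed.
Lemma m1_odd k : (-1) ^ (2 * k + 1) = -1.
Proof. rewrite pow_add, m1_even. ring. Qed.

Lemma cc0 a : cc a 0 = 1.
Proof. unfold cc, al, be. simpl. field. Qed.
Lemma cc1 a : cc a 1 = a.
Proof. unfold cc, al, be. simpl. field. Qed.

Lemma cc_bounds a m : 1 < a -> 0 <= cc a m <= a ^ m.
Proof.
  intros ha. destruct (Nat.Even_or_Odd m) as [[k ->]|[k ->]]; unfold cc, al, be.
  - rewrite m1_even. split. lra. replace ((1 + a) / 2 + (1 - a) / 2 * 1) with 1 by field.
    apply pow_R1_Rle. lra.
  - rewrite m1_odd. split. lra. replace ((1 + a) / 2 + (1 - a) / 2 * -1) with (a^1) by (simpl; field).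
    apply Rle_pow. lra. lia.
Qed.

Lemma C_nonneg n k : 0 <= Binomial.C n k.
Proof. unfold Binomial.C. apply Rmult_le_pos. apply pos_INR.
  apply Rlt_le, Rinv_0_lt_compat, Rmult_lt_0_compat; apply INR_fact_lt_0. Qed.

Lemma sum_nonneg f N : (forall i, (i <= N)%nat -> 0 <= f i) -> 0 <= sum_f_R0 f N.
Proof. induction N; intros H; simpl. apply H; lia.
  apply Rplus_le_le_0_compat. apply IHN; intros; apply H; lia. apply H; lia. Qed.

Lemma T_0 a j : T a 0 j = (INR 0 * a) ^ j.
Proof. unfold T, Wz, Ck. simpl. rewrite C_n_0'. replace (0 - 2*0) with (0 * a) by ring. ring. Qed.

Lemma T_bounds a n j : 1 < a -> 0 <= T a n j <= (INR n * a) ^ j.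
Proof.
  intros ha. revert j. induction n; intros j.
  - rewrite T_0. split. apply pow_le. simpl; lra. lra.
  - rewrite T_rec. split.
    + apply sum_nonneg. intros i _. apply Rmult_le_pos. apply Rmult_le_pos.
      apply C_nonneg. apply IHn. apply cc_bounds; auto.
    + replace (INR (S n) * a) with (INR n * a + a) by (rewrite S_INR; ring).
      rewrite binomial. apply sum_Rle. intros i _.
      rewrite !Rmult_assoc. apply Rmult_le_compat_l. apply C_nonneg.
      apply Rmult_le_compat. apply IHn. apply cc_bounds; auto. apply IHn. apply cc_bounds; auto.
Qed.

Definition D a n j := (INR n * a) ^ j - T a n j.

Lemma D_rec a n j : D a (S n) j = sum_f_R0 (fun i => Binomial.C j i *
   ((INR n * a) ^ i * (a ^ (j - i) - cc a (j - i)) + D a n i * cc a (j - i))) j.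
Proof.
  unfold D at 1. rewrite T_rec.
  replace (INR (S n) * a) with (INR n * a + a) by (rewrite S_INR; ring).
  rewrite binomial. rewrite <- minus_sum. apply sum_eq. intros i _. unfold D. ring.
Qed.

Lemma D_0 a j : D a 0 j = 0.
Proof. unfold D. rewrite T_0. ring. Qed.

Lemma D_j0 a n : D a n 0 = 0.
Proof. induction n. apply D_0. rewrite D_rec. simpl sum_f_R0. rewrite IHn, C_n_0', cc0. simpl. ring. Qed.

Lemma D_j1 a n : D a n 1 = 0.
Proof. induction n. apply D_0. rewrite D_rec. simpl sum_f_R0. rewrite IHn, D_j0, C_n_0', C_n_n', cc0, cc1. simpl. ring. Qed.

Lemma INRS_ge1 n : 1 <= INR (S n).
Proof. rewrite S_INR. pose proof (pos_INR n). lra. Qed.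

Lemma term_bound a K j'' n i (ha : 1 < a) (HK0 : 0 <= K)
  (HK : forall i n, (i <= S j'')%nat -> D a n i <= K * INR (S n) ^ (pred i))
  (Hi : (i <= S j'')%nat) :
  let j := S (S j'') in
  Binomial.C j i * ((INR n * a) ^ i * (a ^ (j - i) - cc a (j - i)) + D a n i * cc a (j - i))
  <= Binomial.C j i * ((1 + K) * a ^ j) * INR (S n) ^ j''.
Proof.
  intros j. rewrite Rmult_assoc. apply Rmult_le_compat_l. apply C_nonneg.
  set (P := INR (S n) ^ j'').
  assert (HP : 1 <= P) by (apply pow_R1_Rle, INRS_ge1).
  assert (Haj : 0 <= a ^ j) by (apply pow_le; lra).
  assert (Hcc := cc_bounds a (j - i) ha).
  assert (Haji : a ^ (j - i) <= a ^ j) by (apply Rle_pow; [lra | lia]).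
  assert (H1 : (INR n * a) ^ i * (a ^ (j - i) - cc a (j - i)) <= a ^ j * P).
  { destruct (Nat.eq_dec i (S j'')) as [->|Hne].
    - replace (j - S j'')%nat with 1%nat by (unfold j; lia). rewrite cc1.
      replace (a ^ 1 - a) with 0 by (simpl; ring). rewrite Rmult_0_r.
      apply Rmult_le_pos; lra.
    - assert (Hx : 0 <= (INR n * a) ^ i) by (apply pow_le; pose proof (pos_INR n); nra).
      assert (H2 : (INR n * a) ^ i <= (INR (S n) * a) ^ i).
      { apply pow_incr. pose proof (pos_INR n). rewrite S_INR. nra. }
      assert (H3 : (INR (S n) * a) ^ i * a ^ (j - i) = INR (S n) ^ i * a ^ j).
      { rewrite Rpow_mult_distr, Rmult_assoc, <- pow_add. f_equal. f_equal. unfold j; lia. }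
      assert (H4 : INR (S n) ^ i <= P) by (apply Rle_pow; [apply INRS_ge1 | lia]).
      assert (H5 : 0 <= a ^ (j - i)) by (apply pow_le; lra).
      assert (H6 : (INR n * a) ^ i * (a ^ (j - i) - cc a (j - i)) <= (INR n * a) ^ i * a ^ (j - i)).
      { apply Rmult_le_compat_l; lra. }
      assert (H7 : (INR n * a) ^ i * a ^ (j - i) <= (INR (S n) * a) ^ i * a ^ (j - i)).
      { apply Rmult_le_compat_r; lra. }
      assert (H8 : INR (S n) ^ i * a ^ j <= P * a ^ j) by (apply Rmult_le_compat_r; lra).
      lra. }
  assert (H2 : D a n i * cc a (j - i) <= K * P * a ^ j).
  { assert (Hpi : INR (S n) ^ pred i <= P) by (apply Rle_pow; [apply INRS_ge1 | lia]).
    assert (HD := HK i n Hi).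
    assert (Hpos : 0 <= INR (S n) ^ pred i) by (apply pow_le; pose proof (INRS_ge1 n); lra).
    apply Rle_trans with (K * INR (S n) ^ pred i * cc a (j - i)).
    apply Rmult_le_compat_r; lra.
    apply Rmult_le_compat. apply Rmult_le_pos; lra. lra.
    apply Rmult_le_compat_l; lra. lra. }
  nra.
Qed.

Lemma D_bound a (ha : 1 < a) : forall m, exists K, 0 <= K /\
  forall i n, (i <= m)%nat -> D a n i <= K * INR (S n) ^ (pred i).
Proof.
  induction m.
  - exists 0. split. lra. intros i n Hi. replace i with 0%nat by lia. rewrite D_j0. lra.
  - destruct IHm as [K [HK0 HK]].
    destruct m as [|j''].
    + exists K. split; auto. intros i n Hi.
      assert (Hp : 0 <= K * INR (S n) ^ pred i) by (apply Rmult_le_pos; auto; apply pow_le, pos_INR).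
      destruct i as [|[|i]]. rewrite D_j0; lra. rewrite D_j1; lra. lia.
    + set (j := S (S j'')).
      set (L := sum_f_R0 (fun i => Binomial.C j i * ((1 + K) * a ^ j)) (S j'')).
      assert (HL : 0 <= L).
      { apply sum_nonneg. intros. apply Rmult_le_pos. apply C_nonneg.
        apply Rmult_le_pos. lra. apply pow_le; lra. }
      assert (Hind : forall n, D a n j <= L * INR n * INR (S n) ^ j'').
      { induction n.
        - rewrite D_0. simpl. lra.
        - rewrite D_rec. unfold j. rewrite sum_S_last.
          fold j.
          rewrite Nat.sub_diag, C_n_n', cc0. simpl (a ^ 0).
          assert (Hs : sum_f_R0 (fun i => Binomial.C j i * ((INR n * a) ^ i * (a ^ (j - i) - cc a (j - i)) + D a n i * cc a (j - i))) (S j'')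
                  <= L * INR (S n) ^ j'').
          { apply Rle_trans with (INR (S n) ^ j'' * L); [| lra].
            unfold L. rewrite scal_sum. apply sum_Rle. intros i Hi.
            apply term_bound; auto. }
          assert (HP1 : INR (S n) ^ j'' <= INR (S (S n)) ^ j'').
          { apply pow_incr. split. apply pos_INR. apply le_INR. lia. }
          assert (HP0 : 0 <= INR (S n) ^ j'') by (apply pow_le, pos_INR).
          assert (HLn : L * INR n * INR (S n) ^ j'' + L * INR (S n) ^ j'' = L * INR (S n) * INR (S n) ^ j'')
            by (rewrite S_INR; ring).
          assert (HLn2 : L * INR (S n) * INR (S n) ^ j'' <= L * INR (S n) * INR (S (S n)) ^ j'').
          { apply Rmult_le_compat_l. apply Rmult_le_pos; auto. apply pos_INR. auto. }
          lra. }
      exists (Rmax K L). split. apply Rle_trans with K; auto; apply Rmax_l.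
      intros i n Hi. destruct (Nat.eq_dec i (S (S j''))) as [->|Hne].
      * apply Rle_trans with (L * INR (S n) ^ pred (S (S j''))).
        { change (pred (S (S j''))) with (S j''). change (INR (S n) ^ S j'') with (INR (S n) * INR (S n) ^ j'').
          specialize (Hind n). unfold j in Hind.
          assert (HP0 : 0 <= INR (S n) ^ j'') by (apply pow_le, pos_INR).
          assert (INR n <= INR (S n)) by (apply le_INR; lia). assert (L * INR n * INR (S n) ^ j'' <= L * (INR (S n) * INR (S n) ^ j'')) by (rewrite <- Rmult_assoc; apply Rmult_le_compat_r; [auto|apply Rmult_le_compat_l; auto]). lra. }
        apply Rmult_le_compat_r. apply pow_le, pos_INR. apply Rmax_r.
      * apply Rle_trans with (K * INR (S n) ^ pred i). apply HK; lia.
        apply Rmult_le_compat_r. apply pow_le, pos_INR. apply Rmax_l.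
Qed.

Definition mu a n j := sum_f_R0 (fun k => Ck k n a * tk k n ^ j) n.

Lemma mu_T a n j : (1 <= n)%nat -> mu a n j = T a n j / INR n ^ j.
Proof.
  intros Hn. assert (Hn0 : INR n <> 0) by (apply not_0_INR; lia).
  unfold mu, T, Rdiv. rewrite Rmult_comm, scal_sum. apply sum_eq. intros k Hk.
  unfold Wz. replace ((k <=? n)%nat) with true by (symmetry; apply Nat.leb_le; lia).
  unfold tk. rewrite <- pow_inv, Rmult_assoc, <- Rpow_mult_distr. f_equal. f_equal. field. auto.
Qed.

Lemma mu_bounds a n j : 1 < a -> (1 <= n)%nat -> 0 <= mu a n j <= a ^ j.
Proof.
  intros ha Hn. rewrite mu_T by auto.
  assert (Hn0 : 0 < INR n) by (apply lt_0_INR; lia).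
  assert (Hp : 0 < INR n ^ j) by (apply pow_lt; auto).
  destruct (T_bounds a n j ha) as [H1 H2]. rewrite Rpow_mult_distr in H2.
  split. apply Rmult_le_pos; auto. apply Rlt_le, Rinv_0_lt_compat; auto.
  apply Rmult_le_reg_r with (INR n ^ j); auto. unfold Rdiv. rewrite Rmult_assoc, Rinv_l by lra. lra.
Qed.

Lemma mu_conv a (ha : 1 < a) J delta : 0 < delta -> exists N, forall n, (N <= n)%nat ->
  forall j, (j <= J)%nat -> Rabs (mu a n j - a ^ j) <= delta.
Proof.
  intros Hd. destruct (D_bound a ha J) as [K [HK0 HK]].
  destruct (INR_unbounded (K * 2 ^ J / delta)) as [N HN].
  exists (S N). intros n Hn j Hj.
  assert (Hn0 : 0 < INR n) by (apply lt_0_INR; lia).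
  assert (HnN : INR N < INR n) by (apply lt_INR; lia).
  destruct (mu_bounds a n j ha ltac:(lia)) as [Hm1 Hm2].
  rewrite Rabs_left1 by lra.
  assert (Heq : a ^ j - mu a n j = D a n j / INR n ^ j).
  { rewrite mu_T by lia. unfold D. rewrite Rpow_mult_distr. field. apply pow_nonzero. lra. }
  cut (a ^ j - mu a n j <= delta); [lra|]. destruct j as [|j'].
  - rewrite Heq, D_j0. unfold Rdiv. rewrite Rmult_0_l. lra.
  - assert (H1 : D a n (S j') <= K * 2 ^ j' * INR n ^ j').
    { apply Rle_trans with (K * INR (S n) ^ j'). apply (HK (S j') n Hj).
      rewrite Rmult_assoc. apply Rmult_le_compat_l; auto. rewrite <- Rpow_mult_distr.
      apply pow_incr. rewrite S_INR. split. pose proof (pos_INR n); lra.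
      assert (1 <= INR n) by (apply (le_INR 1); lia). lra. }
    assert (H2 : K * 2 ^ j' <= K * 2 ^ J).
    { apply Rmult_le_compat_l; auto. apply Rle_pow. lra. lia. }
    assert (H3 : K * 2 ^ J < delta * INR n).
    { assert (0 <= K * 2 ^ J) by (apply Rmult_le_pos; auto; apply pow_le; lra).
      apply Rmult_lt_reg_r with (/ delta). apply Rinv_0_lt_compat; auto.
      replace (delta * INR n * / delta) with (INR n) by (field; lra).
      unfold Rdiv in HN. lra. }
    assert (Hp : 0 < INR n ^ j') by (apply pow_lt; auto).
    rewrite Heq. simpl (INR n ^ S j').
    apply Rmult_le_reg_r with (INR n * INR n ^ j'). apply Rmult_lt_0_compat; auto.
    unfold Rdiv. rewrite Rmult_assoc, Rinv_l by (apply Rgt_not_eq, Rmult_lt_0_compat; auto).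
    assert (K * 2 ^ j' * INR n ^ j' <= delta * INR n * INR n ^ j').
    { apply Rmult_le_compat_r; lra. }
    lra.
Qed.

Lemma exp_in_exp x : exp_in x (exp x).
Proof. unfold exp. destruct (exist_exp x). simpl. auto. Qed.

Definition Em (s m : nat) : nat := (2 * m + s)%nat.

Lemma pow_E u y s m : (u * y) ^ s * ((u * y) * (u * y)) ^ m = u ^ Em s m * y ^ Em s m.
Proof.
  replace ((u * y) * (u * y)) with ((u * y) ^ 2) by ring.
  rewrite <- pow_mult, <- pow_add, <- Rpow_mult_distr. f_equal. unfold Em. lia.
Qed.

Lemma cv_const c : Un_cv (fun _ => c) c.
Proof. intros e He. exists 0%nat. intros. unfold Rdist. rewrite Rminus_diag, Rabs_R0. lra. Qed.

Lemma finite_cv n (g : nat -> nat -> R) (l : nat -> R) :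
  (forall k, (k <= n)%nat -> Un_cv (g k) (l k)) ->
  Un_cv (fun L => sum_f_R0 (fun k => g k L) n) (sum_f_R0 l n).
Proof.
  induction n; intros H; simpl.
  - apply H; lia.
  - apply CV_plus. apply IHn; intros; apply H; lia. apply H; lia.
Qed.

Lemma exp_partial_le z L : 0 <= z ->
  sum_f_R0 (fun m => / INR (fact m) * z ^ m) L <= exp z.
Proof.
  intros Hz. set (e := fun L => sum_f_R0 (fun m => / INR (fact m) * z ^ m) L).
  assert (Hinc : forall L d, e L <= e (L + d)%nat).
  { intros L0 d. induction d. rewrite Nat.add_0_r; lra.
    rewrite Nat.add_succ_r. unfold e at 2. rewrite sum_S_last. fold (e (L0 + d)%nat).
    assert (0 <= / INR (fact (S (L0 + d))) * z ^ S (L0 + d)).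
    { apply Rmult_le_pos. apply Rlt_le, Rinv_0_lt_compat, INR_fact_lt_0. apply pow_le; auto. }
    lra. }
  apply Rle_plus_epsilon. intros eps Heps.
  destruct (exp_in_exp z eps Heps) as [N HN].
  specialize (HN (L + N)%nat ltac:(lia)). unfold Rdist in HN.
  change (Rabs (e (L + N)%nat - exp z) < eps) in HN.
  specialize (Hinc L N). change (e L <= exp z + eps). apply Rabs_def2 in HN. lra.
Qed.

Section Approx.
Variable b : nat -> R.
Variable F : R -> R.
Variable s : nat.
Hypothesis hb : forall m, Rabs (b m) <= / INR (fact m).
Hypothesis hF : forall z, infinite_sum (fun m => b m * z ^ m) (F z).

Definition G y := y ^ s * F (y * y).

Lemma term_bnd u M A (nu : R) m : 0 <= A -> Rabs u <= M -> Rabs nu <= A ^ Em s m ->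
  Rabs (b m * u ^ Em s m * nu) <= (M * A) ^ s * (/ INR (fact m) * ((M * A) * (M * A)) ^ m).
Proof.
  intros HA Hu Hnu. assert (HM : 0 <= M) by (pose proof (Rabs_pos u); lra).
  replace ((M * A) ^ s * (/ INR (fact m) * ((M * A) * (M * A)) ^ m))
    with (/ INR (fact m) * (M ^ Em s m * A ^ Em s m)) by (rewrite <- pow_E; ring).
  rewrite !Rabs_mult, <- RPow_abs. rewrite <- Rmult_assoc.
  apply Rmult_le_compat. apply Rmult_le_pos; apply Rabs_pos || (apply pow_le, Rabs_pos).
  apply Rabs_pos. 2: auto.
  apply Rmult_le_compat; try apply Rabs_pos; auto. apply pow_le, Rabs_pos.
  apply pow_incr. split; auto. apply Rabs_pos.
Qed.

Lemma approx n (w y : nat -> R) u A M : 0 <= A -> Rabs u <= M ->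
  (forall m, Rabs (sum_f_R0 (fun k => w k * y k ^ Em s m) n) <= A ^ Em s m) ->
  forall L,
  Rabs (sum_f_R0 (fun k => w k * G (u * y k)) n -
        sum_f_R0 (fun m => b m * u ^ Em s m * sum_f_R0 (fun k => w k * y k ^ Em s m) n) L)
  <= (M * A) ^ s * (exp ((M * A) * (M * A)) -
        sum_f_R0 (fun m => / INR (fact m) * ((M * A) * (M * A)) ^ m) L).
Proof.
  intros HA Hu Hnu L.
  assert (HM : 0 <= M) by (pose proof (Rabs_pos u); lra).
  set (c := M * A). set (z := c * c).
  assert (Hc : 0 <= c) by (apply Rmult_le_pos; auto).
  assert (Hz : 0 <= z) by (apply Rmult_le_pos; auto).
  assert (Hcs : 0 <= c ^ s) by (apply pow_le; auto).
  set (P := fun L => sum_f_R0 (fun m => b m * u ^ Em s m * sum_f_R0 (fun k => w k * y k ^ Em s m) n) L).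
  set (e := fun L => sum_f_R0 (fun m => / INR (fact m) * z ^ m) L).
  assert (HA1 : forall d, Rabs (P (L + d)%nat - P L) <= c ^ s * (e (L + d)%nat - e L)).
  { induction d. rewrite Nat.add_0_r. unfold Rminus. rewrite !Rplus_opp_r, Rabs_R0. lra.
    rewrite Nat.add_succ_r. unfold P at 1, e at 1. rewrite !sum_S_last. fold (P (L + d)%nat) (e (L + d)%nat).
    assert (Ht := term_bnd u M A (sum_f_R0 (fun k => w k * y k ^ Em s (S (L + d))) n) (S (L + d)) HA Hu (Hnu _)).
    fold c z in Ht.
    replace (P (L + d)%nat + b (S (L + d)) * u ^ Em s (S (L + d)) * sum_f_R0 (fun k => w k * y k ^ Em s (S (L + d))) n - P L)
      with ((P (L + d)%nat - P L) + b (S (L + d)) * u ^ Em s (S (L + d)) * sum_f_R0 (fun k => w k * y k ^ Em s (S (L + d))) n) by ring.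
    eapply Rle_trans. apply Rabs_triang. lra. }
  assert (HexpL : forall L', e L' <= exp z) by (intros; apply exp_partial_le; auto).
  assert (HC : Un_cv P (sum_f_R0 (fun k => w k * G (u * y k)) n)).
  { assert (HP : forall L', P L' = sum_f_R0 (fun k => w k * (u * y k) ^ s *
        sum_f_R0 (fun m => b m * ((u * y k) * (u * y k)) ^ m) L') n).
    { intros L'. unfold P.
      rewrite (sum_eq (fun m => b m * u ^ Em s m * sum_f_R0 (fun k => w k * y k ^ Em s m) n)
        (fun m => sum_f_R0 (fun k => w k * (u * y k) ^ s * (b m * ((u * y k) * (u * y k)) ^ m)) n)).
      2:{ intros m _. rewrite <- scal_sum_l. apply sum_eq. intros k _.
          replace (w k * (u * y k) ^ s * (b m * (u * y k * (u * y k)) ^ m))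
            with (w k * b m * ((u * y k) ^ s * (u * y k * (u * y k)) ^ m)) by ring.
          rewrite pow_E. ring. }
      rewrite sum_swap. apply sum_eq. intros k _. rewrite <- scal_sum_l. reflexivity. }
    intros eps Heps.
    assert (Hcv := finite_cv n (fun k L' => w k * (u * y k) ^ s *
        sum_f_R0 (fun m => b m * ((u * y k) * (u * y k)) ^ m) L')
        (fun k => w k * G (u * y k))).
    assert (Hk : forall k, (k <= n)%nat -> Un_cv (fun L' => w k * (u * y k) ^ s *
        sum_f_R0 (fun m => b m * ((u * y k) * (u * y k)) ^ m) L') (w k * G (u * y k))).
    { intros k _. unfold G. replace (w k * ((u * y k) ^ s * F (u * y k * (u * y k))))
        with ((w k * (u * y k) ^ s) * F (u * y k * (u * y k))) by ring.
      apply (CV_mult (fun _ => w k * (u * y k) ^ s)). apply cv_const. exact (hF _). }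
    destruct (Hcv Hk eps Heps) as [N HN].
    exists N. intros L' HL'. rewrite HP. apply HN. auto. }
  apply Rle_plus_epsilon. intros eta Heta.
  destruct (HC eta Heta) as [N HN]. specialize (HN (L + N)%nat ltac:(lia)). unfold Rdist in HN.
  specialize (HA1 N). specialize (HexpL (L + N)%nat).
  fold c z. fold (P L).
  replace (sum_f_R0 (fun k => w k * G (u * y k)) n - P L)
    with ((P (L + N)%nat - P L) - (P (L + N)%nat - sum_f_R0 (fun k => w k * G (u * y k)) n)) by ring.
  eapply Rle_trans. apply Rabs_triang. rewrite Rabs_Ropp.
  assert (c ^ s * (e (L + N)%nat - e L) <= c ^ s * (exp z - e L)) by (apply Rmult_le_compat_l; lra).
  fold (e L). lra.
Qed.


Lemma abs_sub_le x y : Rabs (x - y) <= Rabs x + Rabs y.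
Proof. unfold Rminus. eapply Rle_trans; [apply Rabs_triang|]. rewrite Rabs_Ropp. lra. Qed.

Lemma sum0 (f : nat -> R) : sum_f_R0 f 0 = f 0%nat.
Proof. reflexivity. Qed.

Lemma main_unif a (ha : 1 < a) q M eps : 0 <= M -> 0 < eps ->
  exists N, forall n, (N <= n)%nat -> forall u, Rabs u <= M ->
  Rabs (sum_f_R0 (fun k => Ck k n a * G (u * tk k n ^ q)) n - G (u * a ^ q)) < eps.
Proof.
  intros HM Heps.
  set (A := a ^ q). assert (HA : 0 <= A) by (apply pow_le; lra).
  set (c := M * A). set (z := c * c).
  assert (Hc : 0 <= c) by (apply Rmult_le_pos; auto).
  assert (Hz : 0 <= z) by (apply Rmult_le_pos; auto).
  assert (Hcs : 0 <= c ^ s) by (apply pow_le; auto).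
  set (eps1 := eps / (4 * (c ^ s + 1))).
  assert (He1 : 0 < eps1) by (unfold eps1; apply Rdiv_lt_0_compat; lra).
  destruct (exp_in_exp z eps1 He1) as [L HL]. specialize (HL L (Nat.le_refl L)).
  unfold Rdist in HL.
  set (e := sum_f_R0 (fun m => / INR (fact m) * z ^ m) L).
  change (Rabs (e - exp z) < eps1) in HL.
  assert (He : e <= exp z) by (apply exp_partial_le; auto).
  assert (HR : c ^ s * (exp z - e) < eps / 4).
  { apply Rabs_def2 in HL. apply Rle_lt_trans with (c ^ s * eps1).
    apply Rmult_le_compat_l; lra.
    unfold eps1. apply Rmult_lt_reg_r with (4 * (c ^ s + 1)). lra.
    field_simplify; lra. }
  set (Sg := sum_f_R0 (fun m => / INR (fact m) * M ^ Em s m) L).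
  assert (HSg : 0 <= Sg).
  { apply sum_nonneg. intros. apply Rmult_le_pos. apply Rlt_le, Rinv_0_lt_compat, INR_fact_lt_0. apply pow_le; auto. }
  set (delta := eps / (4 * (Sg + 1))).
  assert (Hd : 0 < delta) by (unfold delta; apply Rdiv_lt_0_compat; lra).
  assert (HSd : Sg * delta < eps / 4).
  { unfold delta. apply Rmult_lt_reg_r with (4 * (Sg + 1)). lra. field_simplify; lra. }
  destruct (mu_conv a ha (q * Em s L) delta Hd) as [N0 HN0].
  exists (S N0). intros n Hn u Hu.
  assert (Hnu : forall m, sum_f_R0 (fun k => Ck k n a * (tk k n ^ q) ^ Em s m) n = mu a n (q * Em s m)).
  { intros m. unfold mu. apply sum_eq. intros. rewrite pow_mult. reflexivity. }
  assert (Hnub : forall m, Rabs (sum_f_R0 (fun k => Ck k n a * (tk k n ^ q) ^ Em s m) n) <= A ^ Em s m).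
  { intros m. rewrite Hnu. unfold A. rewrite <- pow_mult.
    destruct (mu_bounds a n (q * Em s m) ha ltac:(lia)). rewrite Rabs_right; lra. }
  pose proof (approx n (fun k => Ck k n a) (fun k => tk k n ^ q) u A M HA Hu Hnub L) as ap1.
  assert (H2 : forall m, Rabs (sum_f_R0 (fun k => 1 * A ^ Em s m) 0) <= A ^ Em s m).
  { intros m. rewrite sum0, Rmult_1_l, Rabs_right. lra. apply Rle_ge, pow_le; auto. }
  pose proof (approx 0 (fun _ => 1) (fun _ => A) u A M HA Hu H2 L) as ap2.
  rewrite sum0, Rmult_1_l in ap2.
  rewrite (sum_eq (fun m => b m * u ^ Em s m * sum_f_R0 (fun _ => 1 * A ^ Em s m) 0)
     (fun m => b m * u ^ Em s m * A ^ Em s m)) in ap2 by (intros; rewrite sum0; ring).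
  fold c z e in ap1, ap2.
  set (PS := sum_f_R0 (fun m => b m * u ^ Em s m *
        sum_f_R0 (fun k => Ck k n a * (tk k n ^ q) ^ Em s m) n) L) in ap1.
  set (PT := sum_f_R0 (fun m => b m * u ^ Em s m * A ^ Em s m) L) in ap2.
  assert (Hmid : Rabs (PS - PT) <= Sg * delta).
  { unfold PS, PT. rewrite <- minus_sum. eapply Rle_trans. apply Rsum_abs.
    unfold Sg. rewrite (Rmult_comm (sum_f_R0 _ L) delta), scal_sum. apply sum_Rle. intros m Hm.
    replace (b m * u ^ Em s m * sum_f_R0 (fun k => Ck k n a * (tk k n ^ q) ^ Em s m) n -
       b m * u ^ Em s m * A ^ Em s m) with
       (b m * u ^ Em s m * (mu a n (q * Em s m) - a ^ (q * Em s m)))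
       by (rewrite Hnu; unfold A; rewrite pow_mult; ring).
    rewrite !Rabs_mult, <- RPow_abs.
    assert (Hb := hb m).
    assert (Hpm : Rabs u ^ Em s m <= M ^ Em s m) by (apply pow_incr; split; auto; apply Rabs_pos).
    assert (Hmu : Rabs (mu a n (q * Em s m) - a ^ (q * Em s m)) <= delta).
    { apply HN0. lia. unfold Em. apply Nat.mul_le_mono_l. lia. }
    apply Rmult_le_compat. apply Rmult_le_pos. apply Rabs_pos. apply pow_le, Rabs_pos.
    apply Rabs_pos. apply Rmult_le_compat; auto. apply Rabs_pos. apply pow_le, Rabs_pos. auto. }
  replace (sum_f_R0 (fun k => Ck k n a * G (u * tk k n ^ q)) n - G (u * a ^ q))
    with ((sum_f_R0 (fun k => Ck k n a * G (u * tk k n ^ q)) n - PS) + (PS - PT) - (G (u * A) - PT))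
    by (unfold A; ring).
  cbv beta in ap1.
  set (X := sum_f_R0 (fun k => Ck k n a * G (u * tk k n ^ q)) n) in *.
  assert (T1 := abs_sub_le ((X - PS) + (PS - PT)) (G (u * A) - PT)).
  assert (T2 := Rabs_triang (X - PS) (PS - PT)).
  replace (X - G (u * A)) with ((X - PS) + (PS - PT) - (G (u * A) - PT)) by (unfold A; ring).
  lra.
Qed.

End Approx.

Definition Fc z := let (l, _) := exist_cos z in l.
Definition Fs z := let (l, _) := exist_sin z in l.

Lemma Fc_ser z : infinite_sum (fun m => cos_n m * z ^ m) (Fc z).
Proof. unfold Fc. destruct (exist_cos z) as [l Hl]. exact Hl. Qed.
Lemma Fs_ser z : infinite_sum (fun m => sin_n m * z ^ m) (Fs z).
Proof. unfold Fs. destruct (exist_sin z) as [l Hl]. exact Hl. Qed.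

Lemma inv_fact_le m m' : (m <= m')%nat -> / INR (fact m') <= / INR (fact m).
Proof. intros H. apply Rinv_le_contravar. apply INR_fact_lt_0. apply le_INR, fact_le. auto. Qed.

Lemma cos_n_bnd m : Rabs (cos_n m) <= / INR (fact m).
Proof. unfold cos_n, Rdiv. rewrite Rabs_mult, pow_1_abs, Rabs_inv, Rabs_right.
  rewrite Rmult_1_l. apply inv_fact_le. lia. apply Rle_ge, pos_INR. Qed.
Lemma sin_n_bnd m : Rabs (sin_n m) <= / INR (fact m).
Proof. unfold sin_n, Rdiv. rewrite Rabs_mult, pow_1_abs, Rabs_inv, Rabs_right.
  rewrite Rmult_1_l. apply inv_fact_le. lia. apply Rle_ge, pos_INR. Qed.

Lemma G_cos y : G Fc 0 y = cos y.
Proof. unfold G. simpl pow. rewrite Rmult_1_l. reflexivity. Qed.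
Lemma G_sin y : G Fs 1 y = sin y.
Proof. unfold G, sin, Fs, Rsqr. simpl pow. destruct (exist_sin (y * y)). ring. Qed.

Lemma cos_unif a (ha : 1 < a) q M eps : 0 <= M -> 0 < eps ->
  exists N, forall n, (N <= n)%nat -> forall u, Rabs u <= M ->
  Rabs (sum_f_R0 (fun k => Ck k n a * cos (u * tk k n ^ q)) n - cos (u * a ^ q)) < eps.
Proof.
  intros HM He. destruct (main_unif cos_n Fc 0 cos_n_bnd Fc_ser a ha q M eps HM He) as [N HN].
  exists N. intros n Hn u Hu. specialize (HN n Hn u Hu). rewrite G_cos in HN.
  rewrite (sum_eq _ (fun k => Ck k n a * G Fc 0 (u * tk k n ^ q))). auto.
  intros; rewrite G_cos; auto.
Qed.

Lemma sin_unif a (ha : 1 < a) q M eps : 0 <= M -> 0 < eps ->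
  exists N, forall n, (N <= n)%nat -> forall u, Rabs u <= M ->
  Rabs (sum_f_R0 (fun k => Ck k n a * sin (u * tk k n ^ q)) n - sin (u * a ^ q)) < eps.
Proof.
  intros HM He. destruct (main_unif sin_n Fs 1 sin_n_bnd Fs_ser a ha q M eps HM He) as [N HN].
  exists N. intros n Hn u Hu. specialize (HN n Hn u Hu). rewrite G_sin in HN.
  rewrite (sum_eq _ (fun k => Ck k n a * G Fs 1 (u * tk k n ^ q))). auto.
  intros; rewrite G_sin; auto.
Qed.

Lemma C_ext z w : Cre z = Cre w -> Cim z = Cim w -> z = w.
Proof. destruct z, w; simpl; intros -> ->; reflexivity. Qed.

Lemma Cre_Csum f n : Cre (Csum f n) = sum_f_R0 (fun k => Cre (f k)) n.
Proof. induction n; simpl; auto. rewrite IHn. auto. Qed.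
Lemma Cim_Csum f n : Cim (Csum f n) = sum_f_R0 (fun k => Cim (f k)) n.
Proof. induction n; simpl; auto. rewrite IHn. auto. Qed.

Lemma Cnorm_lt z eps : 0 < eps -> Rabs (Cre z) < eps / 2 -> Rabs (Cim z) < eps / 2 -> Cnorm z < eps.
Proof.
  intros He H1 H2. unfold Cnorm. rewrite <- (sqrt_pow2 eps) by lra.
  apply sqrt_lt_1_alt. rewrite <- (pow2_abs (Cre z)), <- (pow2_abs (Cim z)).
  pose proof (Rabs_pos (Cre z)). pose proof (Rabs_pos (Cim z)).
  split. nra. nra.
Qed.

Lemma Cpow_mi_even m : Cpow (Copp Ci) (2 * m) = mkC ((-1) ^ m) 0.
Proof.
  induction m. reflexivity.
  replace (2 * S m)%nat with (S (S (2 * m))) by lia.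
  change (Cpow (Copp Ci) (S (S (2 * m)))) with (Cmul (Copp Ci) (Cmul (Copp Ci) (Cpow (Copp Ci) (2 * m)))). rewrite IHm.
  apply C_ext; simpl; ring.
Qed.
Lemma Cpow_mi_odd m : Cpow (Copp Ci) (2 * m + 1) = mkC 0 (- (-1) ^ m).
Proof.
  replace (2 * m + 1)%nat with (S (2 * m)) by lia.
  change (Cpow (Copp Ci) (S (2 * m))) with (Cmul (Copp Ci) (Cpow (Copp Ci) (2 * m))). rewrite Cpow_mi_even.
  apply C_ext; simpl; ring.
Qed.
Lemma Cpow_scal z r q : Cpow (Cmul z (RtoC r)) q = mkC (Cre (Cpow z q) * r ^ q) (Cim (Cpow z q) * r ^ q).
Proof.
  induction q. apply C_ext; simpl; ring.
  simpl Cpow. rewrite IHq. apply C_ext; simpl; ring.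
Qed.

Lemma rsum_minus n f g : rsum n f - rsum n g = rsum n (fun j => f j - g j).
Proof. induction n; simpl. ring. rewrite <- IHn. ring. Qed.
Lemma rsum_abs n f : Rabs (rsum n f) <= rsum n (fun j => Rabs (f j)).
Proof. induction n; simpl. rewrite Rabs_R0; lra. eapply Rle_trans. apply Rabs_triang. lra. Qed.
Lemma rsum_le n f g : (forall j, (j < n)%nat -> f j <= g j) -> rsum n f <= rsum n g.
Proof. induction n; simpl; intros H. lra. apply Rplus_le_compat. apply IHn; intros; apply H; lia. apply H; lia. Qed.
Lemma rsum_scal n f c : rsum n (fun j => f j * c) = rsum n f * c.
Proof. induction n; simpl. ring. rewrite IHn. ring. Qed.
Lemma rsum_nonneg n f : (forall j, 0 <= f j) -> 0 <= rsum n f.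
Proof. induction n; simpl; intros H. lra. specialize (IHn H). specialize (H n). lra. Qed.
Lemma rsum_term n f j : (forall j, 0 <= f j) -> (j < n)%nat -> f j <= rsum n f.
Proof. induction n; simpl; intros H Hj. lia.
  assert (0 <= rsum n f) by (apply rsum_nonneg; auto).
  destruct (Nat.eq_dec j n) as [->|Hne]. lra. specialize (IHn H ltac:(lia)). specialize (H n). lra. Qed.

Lemma coord_le_dist d x y j : (j < d)%nat -> Rabs (x j - y j) <= Defs.dist d x y.
Proof.
  intros Hj. unfold Defs.dist. rewrite <- (sqrt_pow2 (Rabs (x j - y j))) by apply Rabs_pos.
  apply sqrt_le_1_alt. rewrite pow2_abs.
  apply (rsum_term d (fun j => (x j - y j) ^ 2)). intros; apply pow2_ge_0. auto.
Qed.

Lemma dot_lip d p x y : Rabs (dot d p x - dot d p y) <= rsum d (fun j => Rabs (p j)) * Defs.dist d x y.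
Proof.
  unfold dot. rewrite rsum_minus. eapply Rle_trans. apply rsum_abs.
  rewrite <- rsum_scal. apply rsum_le. intros j Hj.
  replace (p j * x j - p j * y j) with (p j * (x j - y j)) by ring.
  rewrite Rabs_mult. apply Rmult_le_compat_l. apply Rabs_pos. apply coord_le_dist; auto.
Qed.

Lemma list_bound (l : list nat) : exists B, forall i, In i l -> INR i <= B.
Proof.
  induction l as [|h t [B HB]]. exists 0. intros i [].
  exists (Rmax (INR h) B). intros i [->|Hi]. apply Rmax_l.
  eapply Rle_trans. apply HB; auto. apply Rmax_r.
Qed.

Lemma compact_bound d p K : Defs.compact d K -> exists B, forall x, K x -> Rabs (dot d p x) <= B.
Proof.
  intros [_ Hcov].
  set (P := rsum d (fun j => Rabs (p j))).
  assert (HP : 0 <= P) by (apply rsum_nonneg; intros; apply Rabs_pos).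
  destruct (Hcov nat (fun m y => Rabs (dot d p y) < INR m)) as [l Hl].
  - intros m x Hx. exists ((INR m - Rabs (dot d p x)) / (P + 1)). split.
    apply Rdiv_lt_0_compat; lra.
    intros y Hy. assert (H1 := dot_lip d p x y). fold P in H1.
    assert (H2 := abs_sub_le (dot d p x) (dot d p x - dot d p y)).
    replace (dot d p x - (dot d p x - dot d p y)) with (dot d p y) in H2 by ring.
    assert (Hdist : 0 <= Defs.dist d x y) by (unfold dist; apply sqrt_pos).
    assert (H3 : P * Defs.dist d x y <= P * ((INR m - Rabs (dot d p x)) / (P + 1))).
    { apply Rmult_le_compat_l; lra. }
    assert (H4 : P * ((INR m - Rabs (dot d p x)) / (P + 1)) < INR m - Rabs (dot d p x)).
    { apply Rmult_lt_reg_r with (P + 1). lra. field_simplify; try lra. }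
    lra.
  - intros x _. destruct (INR_unbounded (Rabs (dot d p x))) as [m Hm]. exists m. lra.
  - destruct (list_bound l) as [B HB]. exists B. intros x Hx.
    destruct (Hl x Hx) as [i [Hi Hu]]. specialize (HB i Hi). lra.
Qed.

Lemma conv_of d p f g :
  (forall M eps, 0 <= M -> 0 < eps -> exists N, forall n, (N <= n)%nat -> forall x,
     Rabs (dot d p x) <= M -> Cnorm (Csub (f n x) (g x)) < eps) ->
  conv_pw_and_unif_compact d f g.
Proof.
  intros H. split.
  - intros x _ eps He. destruct (H (Rabs (dot d p x)) eps (Rabs_pos _) He) as [N HN].
    exists N. intros n Hn. apply HN; auto. lra.
  - intros K HK eps He. destruct (compact_bound d p K HK) as [B HB].
    destruct (H (Rmax B 0) eps (Rmax_r _ _) He) as [N HN].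
    exists N. intros n Hn x Hx. apply HN; auto. eapply Rle_trans. apply HB; auto. apply Rmax_l.
Qed.

Lemma case_gen a hbar d p (ha : 1 < a) (hh : 0 < hbar) q r
  (Z : nat -> (nat -> R) -> nat -> Defs.C) (Zt : (nat -> R) -> Defs.C) :
  Rabs r = 1 ->
  (forall n x k, Cre (Z n x k) = 0) ->
  (forall n x k, Cim (Z n x k) = r * (dot d p x / hbar) * tk k n ^ q) ->
  (forall x, Cre (Zt x) = 0) ->
  (forall x, Cim (Zt x) = r * (dot d p x / hbar) * a ^ q) ->
  conv_pw_and_unif_compact d
    (fun n x => Csum (fun k => Cmul (RtoC (Ck k n a)) (Cexp (Z n x k))) n)
    (fun x => Cexp (Zt x)).
Proof.
  intros Hr HZre HZim HZtre HZtim. apply (conv_of d p). intros M eps HM He.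
  assert (HMu : 0 <= M / hbar) by (unfold Rdiv; apply Rmult_le_pos; [lra | apply Rlt_le, Rinv_0_lt_compat; lra]).
  assert (He2 : 0 < eps / 2) by lra.
  destruct (cos_unif a ha q (M / hbar) (eps / 2) HMu He2) as [N1 HN1].
  destruct (sin_unif a ha q (M / hbar) (eps / 2) HMu He2) as [N2 HN2].
  exists (max N1 N2). intros n Hn x Hx.
  assert (Hu : Rabs (r * (dot d p x / hbar)) <= M / hbar).
  { rewrite Rabs_mult, Hr, Rmult_1_l. unfold Rdiv. rewrite Rabs_mult, (Rabs_right (/ hbar)).
    apply Rmult_le_compat_r; auto. apply Rlt_le, Rinv_0_lt_compat; auto.
    apply Rle_ge, Rlt_le, Rinv_0_lt_compat; auto. }
  specialize (HN1 n ltac:(lia) _ Hu). specialize (HN2 n ltac:(lia) _ Hu).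
  apply Cnorm_lt; auto.
  - unfold Csub, Cadd, Copp. simpl Cre. rewrite Cre_Csum.
    rewrite HZtre, HZtim, exp_0.
    rewrite (sum_eq _ (fun k => Ck k n a * cos (r * (dot d p x / hbar) * tk k n ^ q))).
    replace (sum_f_R0 (fun k => Ck k n a * cos (r * (dot d p x / hbar) * tk k n ^ q)) n +
      - (1 * cos (r * (dot d p x / hbar) * a ^ q))) with
      (sum_f_R0 (fun k => Ck k n a * cos (r * (dot d p x / hbar) * tk k n ^ q)) n -
       cos (r * (dot d p x / hbar) * a ^ q)) by ring. auto.
    intros k _. simpl. rewrite HZre, HZim, exp_0. ring.
  - unfold Csub, Cadd, Copp. simpl Cim. rewrite Cim_Csum.
    rewrite HZtre, HZtim, exp_0.
    rewrite (sum_eq _ (fun k => Ck k n a * sin (r * (dot d p x / hbar) * tk k n ^ q))).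
    replace (sum_f_R0 (fun k => Ck k n a * sin (r * (dot d p x / hbar) * tk k n ^ q)) n +
      - (1 * sin (r * (dot d p x / hbar) * a ^ q))) with
      (sum_f_R0 (fun k => Ck k n a * sin (r * (dot d p x / hbar) * tk k n ^ q)) n -
       sin (r * (dot d p x / hbar) * a ^ q)) by ring. auto.
    intros k _. simpl. rewrite HZre, HZim, exp_0. ring.
Qed.

Theorem proposition2p4 (a hbar : R) (d : nat) (p : nat -> R)
  (ha : 1 < a) (hh : 0 < hbar) (hp : in_Rd d p) :
  (* (a) *)
  conv_pw_and_unif_compact d
    (fun n x => Csum (fun k => Cmul (RtoC (Ck k n a))
        (Cexp (Cmul (Cmul Ci (RtoC (dot d p x / hbar))) (RtoC (tk k n))))) n)
    (fun x => Cexp (Cmul Ci (RtoC (a * dot d p x / hbar))))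
  /\
  (* (b) *)
  (forall q : nat, Nat.Even q -> (0 < q)%nat ->
    conv_pw_and_unif_compact d
      (fun n x => Csum (fun k => Cmul (RtoC (Ck k n a))
          (Cexp (Cmul (Cmul (Cmul Ci (RtoC (dot d p x / hbar))) (Cpow (Copp Ci) q))
                      (RtoC (tk k n ^ q))))) n)
      (fun x => Cexp (Cmul (Cmul Ci (RtoC (dot d p x)))
                           (Cmul (Cpow (Cmul (Copp Ci) (RtoC a)) q) (RtoC (/ hbar))))))
  /\
  (* (c) *)
  (forall q : nat, Nat.Odd q -> (0 < q)%nat ->
    conv_pw_and_unif_compact d
      (fun n x => Csum (fun k => Cmul (RtoC (Ck k n a))
          (Cexp (Cmul (Cmul (RtoC (dot d p x / hbar)) (Cpow (Copp Ci) q))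
                      (RtoC (tk k n ^ q))))) n)
      (fun x => Cexp (Cmul (RtoC (dot d p x))
                           (Cmul (Cpow (Cmul (Copp Ci) (RtoC a)) q) (RtoC (/ hbar)))))).
Proof.
  split; [|split].
  - apply (case_gen a hbar d p ha hh 1 1
      (fun n x k => Cmul (Cmul Ci (RtoC (dot d p x / hbar))) (RtoC (tk k n)))
      (fun x => Cmul Ci (RtoC (a * dot d p x / hbar)))).
    + rewrite Rabs_R1. reflexivity.
    + intros; simpl; ring.
    + intros; simpl; ring.
    + intros; simpl; ring.
    + intros; simpl; field. lra.
  - intros q [m ->] _. rewrite Cpow_scal, Cpow_mi_even.
    apply (case_gen a hbar d p ha hh (2 * m) ((-1) ^ m)
      (fun n x k => Cmul (Cmul (Cmul Ci (RtoC (dot d p x / hbar))) (mkC ((-1) ^ m) 0)) (RtoC (tk k n ^ (2 * m))))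
      (fun x => Cmul (Cmul Ci (RtoC (dot d p x))) (Cmul (mkC ((-1) ^ m * a ^ (2 * m)) (0 * a ^ (2 * m))) (RtoC (/ hbar))))).
    + apply pow_1_abs.
    + intros; simpl; ring.
    + intros; simpl; unfold Rdiv; ring.
    + intros; simpl; ring.
    + intros; simpl; unfold Rdiv; ring.
  - intros q [m ->] _. rewrite Cpow_scal, Cpow_mi_odd.
    apply (case_gen a hbar d p ha hh (2 * m + 1) (- (-1) ^ m)
      (fun n x k => Cmul (Cmul (RtoC (dot d p x / hbar)) (mkC 0 (- (-1) ^ m))) (RtoC (tk k n ^ (2 * m + 1))))
      (fun x => Cmul (RtoC (dot d p x)) (Cmul (mkC (0 * a ^ (2 * m + 1)) (- (-1) ^ m * a ^ (2 * m + 1))) (RtoC (/ hbar))))).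
    + rewrite Rabs_Ropp. apply pow_1_abs.
    + intros; simpl; ring.
    + intros; simpl; unfold Rdiv; ring.
    + intros; simpl; ring.
    + intros; simpl; unfold Rdiv; ring.
Qed.
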